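(* Let $f:\mathbb Z^m\to\mathbb R^N$ be a discrete isothermic net, let $s:\mathbb Z^m\to\mathbb R\setminus\{0\}$ satisfy $l(M,f_{ij})/l(M,f)=s_{ij}/s$ and $l(M,f_j)/l(M,f_i)=s_j/s_i$ for every elementary quadrilateral $(f,f_i,f_{ij},f_j)$ with diagonal intersection $M$, and define the edge labelling $\alpha_i$ by $|f_i-f|^2=\alpha_i s s_i$. Then for every $u$ and $i\ne j$, $q(f,f_i,f_{ij},f_j)=\alpha_i/\alpha_j$.
   Context: Notation: for $f:\mathbb Z^m\to\mathbb R^N$, $f=f(u)$, $f_i=f(u+e_i)$, $f_{ij}=f(u+e_i+e_j)$ with $e_i$ the unit vectors, similarly for $s$. A Q-net is a map such that each elementary quadrilateral $(f,f_i,f_{ij},f_j)$ ($i\ne j$) is planar, assumed non-degenerate (distinct vertices, no three collinear, diagonals meeting in a point $M$ distinct from the vertices). Two planar quadrilaterals $(A,B,C,D)$, $(A^*,B^*,C^*,D^* )$ are dual if $A^*B^*\parallel AB$, $B^*C^*\parallel BC$, $C^*D^*\parallel CD$, $D^*A^*\parallel DA$, $A^*C^*\parallel BD$, $B^*D^*\parallel AC$. A Q-net $f$ is a discrete Koenigs net if there is a Q-net $f^*$ with every $(f^*,f^*_i,f^*_{ij},f^*_j)$ dual to $(f,f_i,f_{ij},f_j)$. A circular net is a Q-net all of whose elementary quadrilaterals have their four vertices on a circle. A discrete isothermic net is a circular net which is a discrete Koenigs net. For collinear points $P,Q$, $l(P,Q)$ is the directed (signed) length along their line. For four concircular points $a,b,c,d\in\mathbb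 R^N$, $q(a,b,c,d)=(a-b)(b-c)^{-1}(c-d)(d-a)^{-1}$, computed after identifying a $2$-plane containing them with $\mathbb C$; it is real. (Such $s$ exists and the $\alpha_i$ so defined form an edge labelling: real functions on edges parallel to the $i$-th axis taking equal values on opposite edges of every elementary square.) *)

(* Defs.v *)
(* Points of R^N are row vectors 'rV[R]_N over a real closed
   field R (generalising the reals); the lattice Z^m is 'I_m -> int. *)
From HB Require Import structures.
From mathcomp Require Import all_boot all_order all_algebra.
Set Implicit Arguments. Unset Strict Implicit. Unset Printing Implicit Defensive.
Import Order.TTheory GRing.Theory Num.Theory.
Local Open Scope ring_scope.

Section Defs.
Variables (R : rcfType) (N : nat).
Notation pt := 'rV[R]_N.

Definition dot (x y : pt) : R := \sum_(k < N) x 0 k * y 0 k.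
Definition norm2 (x : pt) : R := dot x x.

Definition parallel (x y : pt) : bool := (\rank (col_mx x y) <= 1)%N.
Definition collinear (A B C : pt) : bool := parallel (B - A) (C - A).
Definition coplanar (A B C D : pt) : bool :=
  (\rank (col_mx (B - A) (col_mx (C - A) (D - A))) <= 2)%N.

Definition diag_meet (A B C D M : pt) : Prop :=
  (exists t : R, M = A + t *: (C - A)) /\ (exists t : R, M = B + t *: (D - B)).

Definition nondeg_quad (A B C D : pt) : Prop :=
  [/\ coplanar A B C D,
      [&& A != B, A != C, A != D, B != C, B != D & C != D],
      [&& ~~ collinear A B C, ~~ collinear A B D, ~~ collinear A C D
        & ~~ collinear B C D] &
      (exists M, diag_meet A B C D M /\ [&& M != A, M != B, M != C & M != D])].

Definition dual_quads (A B C D As Bs Cs Ds : pt) : Prop :=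
  [/\ parallel (Bs - As) (B - A), parallel (Cs - Bs) (C - B),
      parallel (Ds - Cs) (D - C) & parallel (As - Ds) (A - D)] /\
  (parallel (Cs - As) (D - B) /\ parallel (Ds - Bs) (C - A)).

(* four points on a circle: coplanar with a centre c equidistant from them *)
Definition concircular (A B C D : pt) : Prop :=
  exists c : pt,
    (\rank (col_mx (B - A) (col_mx (C - A) (col_mx (D - A) (c - A)))) <= 2)%N /\
    [/\ norm2 (B - c) = norm2 (A - c), norm2 (C - c) = norm2 (A - c)
      & norm2 (D - c) = norm2 (A - c)].

(* directed length of Q - P along a line oriented by the unit vector e *)
Definition dlen (e P Q : pt) : R := dot (Q - P) e.

(* complex numbers as pairs of reals *)
Definition csub (z w : R * R) : R * R := (z.1 - w.1, z.2 - w.2).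
Definition cmul (z w : R * R) : R * R :=
  (z.1 * w.1 - z.2 * w.2, z.1 * w.2 + z.2 * w.1).
Definition cinv (z : R * R) : R * R :=
  (z.1 / (z.1 ^+ 2 + z.2 ^+ 2), - z.2 / (z.1 ^+ 2 + z.2 ^+ 2)).

(* an identification of the 2-plane o + span(e1,e2) with C *)
Definition orthonormal2 (e1 e2 : pt) : Prop :=
  [/\ dot e1 e1 = 1, dot e2 e2 = 1 & dot e1 e2 = 0].
Definition in_plane (o e1 e2 x : pt) : Prop :=
  x - o = dot (x - o) e1 *: e1 + dot (x - o) e2 *: e2.
Definition coordC (o e1 e2 x : pt) : R * R := (dot (x - o) e1, dot (x - o) e2).

Definition qC (a b c d : R * R) : R * R :=
  cmul (cmul (cmul (csub a b) (cinv (csub b c))) (csub c d)) (cinv (csub d a)).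
Definition q_in (o e1 e2 a b c d : pt) : R * R :=
  qC (coordC o e1 e2 a) (coordC o e1 e2 b) (coordC o e1 e2 c) (coordC o e1 e2 d).
End Defs.

Definition lat (m : nat) := 'I_m -> int.
Definition shift m (u : lat m) (i : 'I_m) : lat m :=
  fun k => u k + (((k == i) : nat)%:Z).

Section Nets.
Variables (R : rcfType) (N m : nat).
Notation pt := 'rV[R]_N.

Definition Qnet (f : lat m -> pt) : Prop :=
  forall u (i j : 'I_m), i != j ->
    nondeg_quad (f u) (f (shift u i)) (f (shift (shift u i) j)) (f (shift u j)).

Definition Koenigs (f : lat m -> pt) : Prop :=
  Qnet f /\ exists fs : lat m -> pt, Qnet fs /\
    forall u (i j : 'I_m), i != j ->
      dual_quads (f u) (f (shift u i)) (f (shift (shift u i) j)) (f (shift u j))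
                 (fs u) (fs (shift u i)) (fs (shift (shift u i) j)) (fs (shift u j)).

Definition circular_net (f : lat m -> pt) : Prop :=
  Qnet f /\ forall u (i j : 'I_m), i != j ->
    concircular (f u) (f (shift u i)) (f (shift (shift u i) j)) (f (shift u j)).

Definition isothermic (f : lat m -> pt) : Prop := circular_net f /\ Koenigs f.

Definition alpha (f : lat m -> pt) (s : lat m -> R) (i : 'I_m) (u : lat m) : R :=
  norm2 (f (shift u i) - f u) / (s u * s (shift u i)).
End Nets.

(* Main.v *)
Require Import Defs.
From mathcomp Require Import all_boot all_order all_algebra.
From Stdlib Require Import Ring Field.
Import Order.TTheory GRing.Theory Num.Theory.
Local Open Scope ring_scope.
Section S.
Variable R : rcfType.
Definition radd (x y : R) : R := x + y.
Definition rmul (x y : R) : R := x * y.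
Definition ropp (x : R) : R := - x.
Definition rinv (x : R) : R := x^-1.
Definition r0 : R := 0.
Definition r1 : R := 1.
Lemma RT : @ring_theory R r0 r1 radd rmul (fun x y => radd x (ropp y)) ropp (@eq R).
Proof. split=> //; rewrite /radd/rmul/ropp/r0/r1=>*; [exact: add0r|exact: addrC|exact: addrA|exact: mul1r|exact: mulrC|exact: mulrA|exact: mulrDl|exact: subrr]. Qed.
Lemma FT : @field_theory R r0 r1 radd rmul (fun x y => radd x (ropp y)) ropp (fun x y => rmul x (rinv y)) rinv (@eq R).
Proof. split=> //; first exact: RT. by apply/eqP; rewrite oner_eq0. by rewrite /rinv/rmul/r0 => p /eqP; apply: mulVf. Qed.
Add Field RF : FT.
Lemma addE (x y : R) : x + y = radd x y. Proof. by []. Qed.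
Lemma mulE (x y : R) : x * y = rmul x y. Proof. by []. Qed.
Lemma oppE (x : R) : - x = ropp x. Proof. by []. Qed.
Lemma invE (x : R) : x^-1 = rinv x. Proof. by []. Qed.
Lemma zeE : 0 = r0 :> R. Proof. by []. Qed.
Lemma onE : 1 = r1 :> R. Proof. by []. Qed.
Lemma neq0E (x : R) : x != 0 -> x <> r0. Proof. by move/eqP. Qed.
Ltac norm_hyp := rewrite ?expr2 ?addE ?mulE ?oppE ?invE ?zeE ?onE; exact.
Ltac norm := rewrite ?expr2 ?addE ?mulE ?oppE ?invE ?zeE ?onE;
  match goal with |- ?a = ?b => change (@eq (Num.RealClosedField.sort R) a b) end.
Variable N : nat.
Notation pt := 'rV[R]_N.
Lemma dotC (x y : pt) : dot x y = dot y x.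
Proof. by apply: eq_bigr => k _; rewrite mulrC. Qed.
Lemma dotDl (x y z : pt) : dot (x + y) z = dot x z + dot y z.
Proof. by rewrite /dot -big_split; apply: eq_bigr => k _; rewrite mxE mulrDl. Qed.
Lemma dotNl (x z : pt) : dot (- x) z = - dot x z.
Proof. by rewrite /dot -sumrN; apply: eq_bigr => k _; rewrite mxE mulNr. Qed.
Lemma dotZl (a : R) (x z : pt) : dot (a *: x) z = a * dot x z.
Proof. by rewrite /dot mulr_sumr; apply: eq_bigr => k _; rewrite mxE mulrA. Qed.
Lemma dotBl (x y z : pt) : dot (x - y) z = dot x z - dot y z.
Proof. by rewrite dotDl dotNl. Qed.
Lemma dotDr (x y z : pt) : dot z (x + y) = dot z x + dot z y.
Proof. by rewrite dotC dotDl !(dotC z). Qed.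
Lemma dotBr (x y z : pt) : dot z (x - y) = dot z x - dot z y.
Proof. by rewrite dotC dotBl !(dotC z). Qed.
Lemma dotZr (a : R) (x z : pt) : dot z (a *: x) = a * dot z x.
Proof. by rewrite dotC dotZl dotC. Qed.
Lemma norm2_eq0 (x : pt) : norm2 x = 0 -> x = 0.
Proof.
move=> h; apply/rowP => k; rewrite mxE.
have := psumr_eq0P (P := predT) (F := fun k => x 0 k * x 0 k) _ h.
have H : forall i : 'I_N, predT i -> 0 <= x 0 i * x 0 i by move=> i _; rewrite -expr2 sqr_ge0.
by move=> /(_ H k isT) /eqP; rewrite mulf_eq0 orbb => /eqP ->.
Qed.
Lemma norm2_ge0 (x : pt) : 0 <= norm2 x.
Proof. by apply: sumr_ge0 => i _; rewrite -expr2 sqr_ge0. Qed.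
Lemma parZ (a : R) (x : pt) : parallel (a *: x) x.
Proof.
rewrite /parallel.
have -> : col_mx (a *: x) x = col_mx (a%:M : 'M_1) (1%:M) *m x.
  by rewrite mul_col_mx !mul_scalar_mx scale1r.
apply: leq_trans (mxrankM_maxr _ _) _; exact: rank_leq_row.
Qed.
Definition inpl (e1 e2 x : pt) := x = dot x e1 *: e1 + dot x e2 *: e2.
Lemma inplB e1 e2 (x y : pt) : inpl e1 e2 x -> inpl e1 e2 y -> inpl e1 e2 (x - y).
Proof.
rewrite /inpl => hx hy; rewrite !dotBl !scalerBl.
by rewrite {1}hx {1}hy opprD addrACA.
Qed.
Lemma inplZ e1 e2 (k : R) (x : pt) : inpl e1 e2 x -> inpl e1 e2 (k *: x).
Proof. by rewrite /inpl => hx; rewrite !dotZl -!scalerA -scalerDr -hx. Qed.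
Lemma inpl_dot e1 e2 (x y : pt) : orthonormal2 e1 e2 -> inpl e1 e2 x ->
  dot x y = dot x e1 * dot y e1 + dot x e2 * dot y e2.
Proof.
move=> _ hx; have -> : dot x y = dot (dot x e1 *: e1 + dot x e2 *: e2) y by rewrite -hx.
by rewrite dotDl !dotZl (dotC e1 y) (dotC e2 y).
Qed.
Lemma dsub (o M X Y e : pt) : dot (X - o) e - dot (Y - o) e = dot (X - M) e - dot (Y - M) e.
Proof.
rewrite -!dotBl; congr dot; by rewrite !opprB !addrA !subrK.
Qed.
Lemma dd (M X Y e : pt) : dot (X - Y) e = dot (X - M) e - dot (Y - M) e.
Proof. by rewrite -dotBl opprB addrA subrK. Qed.
Lemma norm2_neq0 (x y : pt) : x != y -> norm2 (x - y) != 0.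
Proof. by apply: contraNneq => /norm2_eq0 /eqP; rewrite subr_eq0. Qed.
Lemma norm2B (x y : pt) : norm2 (x - y) = norm2 x - (dot x y + dot x y) + norm2 y.
Proof. rewrite /norm2 !dotBl !dotBr (dotC y x). norm. ring. Qed.
Lemma norm2Z (k : R) (x : pt) : norm2 (k *: x) = k * k * norm2 x.
Proof. by rewrite /norm2 dotZl dotZr mulrA. Qed.
Lemma alg (a1 a2 b1 b2 mu sA sB : R) :
  let na := a1*a1 + a2*a2 in let nb := b1*b1+b2*b2 in let k := mu * nb / na in
  na != 0 -> sA != 0 -> sB != 0 -> mu != 0 ->
  (b1 - k*a1)*(b1-k*a1) + (b2-k*a2)*(b2-k*a2) != 0 ->
  (mu*b1 - a1)*(mu*b1-a1) + (mu*b2-a2)*(mu*b2-a2) != 0 ->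
  qC (a1,a2) (b1,b2) (k*a1, k*a2) (mu*b1, mu*b2)
  = (((b1-a1)*(b1-a1)+(b2-a2)*(b2-a2))/(sA*sB) /
       (((mu*b1-a1)*(mu*b1-a1)+(mu*b2-a2)*(mu*b2-a2))/(sA*(mu*sB))), 0).
Proof.
move=> na nb k /neq0E h1 /neq0E h2 /neq0E h3 /neq0E h4 h5 /neq0E h6.
have h7 : (b1*na - mu*nb*a1)*(b1*na - mu*nb*a1) + (b2*na - mu*nb*a2)*(b2*na - mu*nb*a2) <> r0.
  have -> : (b1*na - mu*nb*a1)*(b1*na - mu*nb*a1) + (b2*na - mu*nb*a2)*(b2*na - mu*nb*a2)
     = (na * na) * ((b1 - k*a1)*(b1-k*a1) + (b2-k*a2)*(b2-k*a2)).
    rewrite /k. norm. field. exact h1.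
  apply: neq0E. by rewrite !mulf_neq0 // ; apply/eqP.
rewrite /qC /cmul /csub /cinv /= /k /na /nb.
move: h7; rewrite /na /nb => h7.
congr pair.
- norm. field. repeat split; [exact h3|exact h4|exact h2|exact h6|exact h1|].
  move: h7; norm_hyp.
- norm. field. repeat split; [exact h6|exact h1|].
  move: h7; norm_hyp.
Qed.
Lemma alg2 (a1 a2 b1 b2 k mu sA sB : R) :
  k = mu * (b1*b1+b2*b2) / (a1*a1+a2*a2) ->
  a1*a1 + a2*a2 != 0 -> sA != 0 -> sB != 0 -> mu != 0 ->
  (b1 - k*a1)*(b1-k*a1) + (b2-k*a2)*(b2-k*a2) != 0 ->
  (mu*b1 - a1)*(mu*b1-a1) + (mu*b2-a2)*(mu*b2-a2) != 0 ->
  qC (a1,a2) (b1,b2) (k*a1, k*a2) (mu*b1, mu*b2)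
  = (((b1-a1)*(b1-a1)+(b2-a2)*(b2-a2))/(sA*sB) /
       (((mu*b1-a1)*(mu*b1-a1)+(mu*b2-a2)*(mu*b2-a2))/(sA*(mu*sB))), 0).
Proof. move=> ->; exact: alg. Qed.

Lemma inplXY e1 e2 (o X Y : pt) : in_plane o e1 e2 X -> in_plane o e1 e2 Y -> inpl e1 e2 (X - Y).
Proof.
move=> hX hY; have -> : X - Y = (X - o) - (Y - o) by rewrite opprB addrA subrK.
exact: inplB.
Qed.
Lemma power (a b c : pt) (k0 mu : R) : k0 != 1 -> mu != 1 ->
  norm2 (b - c) = norm2 (a - c) -> norm2 (k0 *: a - c) = norm2 (a - c) ->
  norm2 (mu *: b - c) = norm2 (a - c) -> k0 * norm2 a = mu * norm2 b.
Proof.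
move=> hk1 hm1; rewrite !norm2B !norm2Z !dotZl.
set na := norm2 a; set nb := norm2 b; set nc := norm2 c.
set pa := dot a c; set pb := dot b c.
move=> hcB hcC hcD.
rewrite -subr_eq0 in hk1; rewrite -subr_eq0 in hm1.
have E1 : (k0 + 1) * na = pa + pa.
  have : (k0 - 1) * ((k0 + 1) * na - (pa + pa)) = 0.
    have -> : (k0 - 1) * ((k0 + 1) * na - (pa + pa)) =
      (k0 * k0 * na - (k0 * pa + k0 * pa) + nc) - (na - (pa + pa) + nc) by norm; ring.
    by rewrite hcC subrr.
  by move/eqP; rewrite mulf_eq0 (negbTE hk1) /= subr_eq0 => /eqP.
have E2 : (mu + 1) * nb = pb + pb.
  have : (mu - 1) * ((mu + 1) * nb - (pb + pb)) = 0.
    have -> : (mu - 1) * ((mu + 1) * nb - (pb + pb)) =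
      (mu * mu * nb - (mu * pb + mu * pb) + nc) - (nb - (pb + pb) + nc) by norm; ring.
    by rewrite hcD hcB subrr.
  by move/eqP; rewrite mulf_eq0 (negbTE hm1) /= subr_eq0 => /eqP.
apply/eqP; rewrite -subr_eq0; apply/eqP.
  have -> : k0 * na - mu * nb = ((k0 + 1) * na - (pa + pa)) - ((mu + 1) * nb - (pb + pb))
     + ((nb - (pb + pb) + nc) - (na - (pa + pa) + nc)) by norm; ring.
  by rewrite E1 E2 hcB !subrr addr0.
Qed.

Lemma core (A B C D o e1 e2 : pt) (sA sB sD : R) :
  nondeg_quad A B C D -> concircular A B C D ->
  sA != 0 -> sB != 0 -> sD != 0 ->
  (forall M, diag_meet A B C D M -> forall e, norm2 e = 1 -> parallel e (D - B) ->
      dlen e M D / dlen e M B = sD / sB) ->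
  orthonormal2 e1 e2 -> in_plane o e1 e2 A -> in_plane o e1 e2 B ->
  in_plane o e1 e2 C -> in_plane o e1 e2 D ->
  q_in o e1 e2 A B C D = (norm2 (B - A) / (sA * sB) / (norm2 (D - A) / (sA * sD)), 0).
Proof.
case=> _ /and5P [hAB hAC hAD hBC /andP [hBD hCD]] _ [M [[[t hMt] [r hMr]] /and4P [hMA hMB hMC hMD]]].
move=> [c [_ [hcB hcC hcD]]] hsA hsB hsD hs hon hiA hiB hiC hiD.
set v := C - A; set w := D - B.
have ht : t != 0 by apply: contraNneq hMA => t0; rewrite hMt t0 scale0r addr0.
have hr : r != 0 by apply: contraNneq hMB => r0; rewrite hMr r0 scale0r addr0.
have hAM : A - M = (- t) *: v by rewrite hMt opprD addNKr scaleNr.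
have hBM : B - M = (- r) *: w by rewrite hMr opprD addNKr scaleNr.
have hCM' : C - M = (1 - t) *: v by rewrite hMt opprD addrA -/v scalerBl scale1r.
have hDM' : D - M = (1 - r) *: w by rewrite hMr opprD addrA -/w scalerBl scale1r.
set k0 : R := (t - 1) / t; set mu : R := (r - 1) / r.
have hCM : C - M = k0 *: (A - M).
  rewrite hCM' hAM scalerA; congr (_ *: _); rewrite /k0; move/neq0E: ht => ht'. norm. field. exact ht'.
have hDM : D - M = mu *: (B - M).
  rewrite hDM' hBM scalerA; congr (_ *: _); rewrite /mu; move/neq0E: hr => hr'. norm. field. exact hr'.
have hw : w != 0 by rewrite subr_eq0 eq_sym.
have hnw : norm2 w != 0 by apply: contraNneq hw => /norm2_eq0 ->.
have hnw0 : 0 < norm2 w by rewrite lt_def hnw norm2_ge0.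
set q := Num.sqrt (norm2 w).
have hq : q != 0 by rewrite /q gt_eqF // sqrtr_gt0.
have hqq : q * q = norm2 w by rewrite -expr2 sqr_sqrtr // norm2_ge0.
set e := q^-1 *: w.
have hsDm : sD = mu * sB.
  have := hs M (conj (ex_intro _ t hMt) (ex_intro _ r hMr)) e.
  have he1 : norm2 e = 1.
    rewrite /e norm2Z -hqq; move/neq0E: hq => hq'. norm. field. exact hq'.
  move=> /(_ he1 (parZ _ _)).
  rewrite /dlen hDM dotZl.
  have hbe : dot (B - M) e != 0.
    rewrite hBM /e dotZl dotZr. rewrite !mulf_neq0 ?oppr_eq0 ?invr_eq0 //.
  move/neq0E: hbe => hbe'; move/neq0E: hsB => hsB' h.
  have -> : sD = sD / sB * sB. norm. field. exact hsB'.
  rewrite -h. norm. field. exact hbe'.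
have eX : forall X, X - c = (X - M) - (c - M).
  by move=> X; rewrite opprB addrA subrK.
move: hcB hcC hcD; rewrite !eX hCM hDM => hcB hcC hcD.
have hk1 : k0 != 1.
  rewrite -subr_eq0.
  have -> : k0 - 1 = - t^-1 by rewrite /k0; move/neq0E: ht => ht'; norm; field; exact ht'.
  by rewrite oppr_eq0 invr_eq0.
have hm1 : mu != 1.
  rewrite -subr_eq0.
  have -> : mu - 1 = - r^-1 by rewrite /mu; move/neq0E: hr => hr'; norm; field; exact hr'.
  by rewrite oppr_eq0 invr_eq0.
have Pw := @power _ _ _ _ _ hk1 hm1 hcB hcC hcD.
have ha : inpl e1 e2 (A - M) by rewrite hAM; apply: inplZ; exact (@inplXY e1 e2 o C A hiC hiA).
have hb : inpl e1 e2 (B - M) by rewrite hBM; apply: inplZ; exact (@inplXY e1 e2 o D B hiD hiB).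
have hBA := @inplXY e1 e2 o B A hiB hiA.
have hDA := @inplXY e1 e2 o D A hiD hiA.
have hBCp := @inplXY e1 e2 o B C hiB hiC.
have hna := @norm2_neq0 A M ltac:(by rewrite eq_sym).
have hBC0 := @norm2_neq0 B C hBC.
have hDA0 := @norm2_neq0 D A ltac:(by rewrite eq_sym).
rewrite /norm2 in hna Pw hBC0 hDA0 *.
rewrite (inpl_dot _ _ _ _ hon ha) in hna Pw.
rewrite (inpl_dot _ _ _ _ hon hb) in Pw.
rewrite (inpl_dot _ _ _ _ hon hBCp) (dd M B C e1) (dd M B C e2) hCM !dotZl in hBC0.
rewrite (inpl_dot _ _ _ _ hon hDA) (dd M D A e1) (dd M D A e2) hDM !dotZl in hDA0.
have -> : q_in o e1 e2 A B C D = qC (dot (A - M) e1, dot (A - M) e2) (dot (B - M) e1, dot (B - M) e2)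
   (k0 * dot (A - M) e1, k0 * dot (A - M) e2) (mu * dot (B - M) e1, mu * dot (B - M) e2).
  by rewrite /q_in /qC /coordC /csub /= !(dsub o M) hCM hDM !dotZl.
rewrite (inpl_dot _ _ _ _ hon hBA) (dd M B A e1) (dd M B A e2).
rewrite (inpl_dot _ _ _ _ hon hDA) (dd M D A e1) (dd M D A e2) hDM !dotZl hsDm.
have hmu : mu != 0 by apply: contraNneq hsD => m0; rewrite hsDm m0 mul0r.
apply: alg2 => //.
move: Pw; move/neq0E: hna => hna' Pw.
rewrite -Pw. norm. field. exact hna'.
Qed.
End S.
Theorem mainTheorem16 (R : rcfType) (N m : nat)
  (f : lat m -> 'rV[R]_N) (s : lat m -> R)
  (hf : isothermic f)
  (hs0 : forall u, s u != 0)
  (hs1 : forall u (i j : 'I_m) (M : 'rV[R]_N), i != j ->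
     diag_meet (f u) (f (shift u i)) (f (shift (shift u i) j)) (f (shift u j)) M ->
     forall e : 'rV[R]_N, norm2 e = 1 ->
       parallel e (f (shift (shift u i) j) - f u) ->
       dlen e M (f (shift (shift u i) j)) / dlen e M (f u)
         = s (shift (shift u i) j) / s u)
  (hs2 : forall u (i j : 'I_m) (M : 'rV[R]_N), i != j ->
     diag_meet (f u) (f (shift u i)) (f (shift (shift u i) j)) (f (shift u j)) M ->
     forall e : 'rV[R]_N, norm2 e = 1 ->
       parallel e (f (shift u j) - f (shift u i)) ->
       dlen e M (f (shift u j)) / dlen e M (f (shift u i))
         = s (shift u j) / s (shift u i)) :
  forall u (i j : 'I_m), i != j ->
    forall o e1 e2 : 'rV[R]_N, orthonormal2 e1 e2 ->
      in_plane o e1 e2 (f u) -> in_plane o e1 e2 (f (shift u i)) ->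
      in_plane o e1 e2 (f (shift (shift u i) j)) -> in_plane o e1 e2 (f (shift u j)) ->
      q_in o e1 e2 (f u) (f (shift u i)) (f (shift (shift u i) j)) (f (shift u j))
        = (alpha f s i u / alpha f s j u, 0).
Proof.
move=> u i j hij o e1 e2 hon hA hB hC hD.
case: hf => [[hQ hcirc] _].
rewrite /alpha.
exact: (@core R N _ _ _ _ _ _ _ _ _ _ (hQ u i j hij) (hcirc u i j hij) (hs0 _) (hs0 _) (hs0 _)
  (fun M hM e he hp => hs2 u i j M hij hM e he hp) hon hA hB hC hD).
Qed.
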